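(* Let $K$ be a field of characteristic $\neq 2$, $n\ge1$, and let $\mathcal C$ be an EACP over $K$ with natural basis $\{h_1,\dots,h_n,r\}$ and structural constants $a_{ij},b_i$. Suppose $\sum_{j=1}^n a_{ij}a_{jk}=0$ and $b_i=0$ for all $i,k=1,\dots,n$. Then $\mathcal C$ is alternative, power associative, and satisfies the Jacobi identity $(xy)z+(yz)x+(zx)y=0$ and the Jordan identity $(xy)x^2=x(yx^2)$ for all $x,y,z\in\mathcal C$.
   Context: An EACP over a field $K$ (characteristic $\neq 2$) is a $K$-algebra $\mathcal C$ with a basis $\{h_1,\dots,h_n,r\}$ (called a natural basis) whose multiplication is determined by bilinearity from $$h_ir=rh_i=\tfrac12\Big(\sum_{j=1}^n a_{ij}h_j+b_ir\Big),\qquad h_ih_j=0\ (i,j=1,\dots,n),\qquad rr=0,$$ for some constants $a_{ij},b_i\in K$. Alternative means $(xx)y=x(xy)$ and $(yx)x=y(xx)$ for all $x,y$; power associative means $x^mx^k=x^{m+k}$ for all $x$ and all positive integers $m,k$. *)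

(* Defs.v *)
From HB Require Import structures.
From mathcomp Require Import all_boot all_order all_algebra.
Set Implicit Arguments. Unset Strict Implicit. Unset Printing Implicit Defensive.
Import GRing.Theory.
Local Open Scope ring_scope.

(* The EACP with natural basis {h_1..h_n, r}: basis indexed by option 'I_n,
   Some i = h_(i+1), None = r. Elements are coordinate vectors. *)
Notation eacp K n := {ffun option (ordinal n) -> (K^o)%type}.

Definition ebasis (K : fieldType) (n : nat) (u : option 'I_n) : eacp K n :=
  [ffun w => (w == u)%:R].

Definition eacp_table (K : fieldType) (n : nat)
  (a : 'I_n -> 'I_n -> K) (b : 'I_n -> K) (u v : option 'I_n) : eacp K n :=
  match u, v with
  | Some i, None | None, Some i =>
      2^-1 *: (\sum_j a i j *: ebasis K (Some j) + b i *: ebasis K None)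
  | _, _ => 0
  end.

Definition eacp_mul (K : fieldType) (n : nat)
  (a : 'I_n -> 'I_n -> K) (b : 'I_n -> K) (x y : eacp K n) : eacp K n :=
  \sum_u \sum_v (x u * y v) *: eacp_table a b u v.

(* right-normed powers: x^1 = x, x^(m+1) = x^m x (used for m >= 1) *)
Definition eacp_pow (K : fieldType) (n : nat)
  (a : 'I_n -> 'I_n -> K) (b : 'I_n -> K) (x : eacp K n) (m : nat) : eacp K n :=
  iter m.-1 (fun y => eacp_mul a b y x) x.

(* Main.v *)
Require Import Defs.
From HB Require Import structures.
From mathcomp Require Import all_boot all_order all_algebra ring zify.
Import GRing.Theory.
Local Open Scope ring_scope.
Lemma big_opt (R : zmodType) (T : finType) (F : option T -> R) :
  \sum_u F u = F None + \sum_i F (Some i).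
Proof.
rewrite (bigD1 None) //=; congr (_ + _).
rewrite (reindex_omap Some id) => [|[i|] //].
by apply: eq_bigl => i /=; rewrite eqxx.
Qed.
Lemma scE (K : fieldType) n (c : K) (f : eacp K n) w : (c *: f) w = c * f w.
Proof. by rewrite ffunE. Qed.
Lemma adE (K : fieldType) n (f g : eacp K n) w : (f + g) w = f w + g w.
Proof. by rewrite ffunE. Qed.
Lemma zE (K : fieldType) n w : (0 : eacp K n) w = 0.
Proof. by rewrite ffunE. Qed.
Lemma sE (K : fieldType) n (F : 'I_n -> eacp K n) w : (\sum_i F i) w = \sum_i F i w.
Proof. by rewrite sum_ffunE. Qed.
Lemma sE' (K : fieldType) n (F : option 'I_n -> eacp K n) w : (\sum_i F i) w = \sum_i F i w.
Proof. by rewrite sum_ffunE. Qed.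
Lemma bE (K : fieldType) n (u w : option 'I_n) : ebasis K u w = (w == u)%:R.
Proof. by rewrite ffunE. Qed.

Lemma tabE (K : fieldType) n (a : 'I_n -> 'I_n -> K) (b : 'I_n -> K) i (w : option 'I_n) :
  eacp_table a b (Some i) None w = 2^-1 * (match w with Some k => a i k | None => b i end).
Proof.
rewrite /eacp_table scE adE sE scE bE.
case: w => [k|] /=.
  rewrite (bigD1 k) //= big1 => [|j jk]; rewrite ?scE ?bE.
  by rewrite eqxx mulr1 /= mulr0 !addr0.
  by rewrite /= (inj_eq (@Some_inj _)) eq_sym (negbTE jk) mulr0.
rewrite big1 => [|j _]; rewrite ?scE ?bE /= ?mulr0 //.
by rewrite add0r mulr1.
Qed.
Lemma aux (K : fieldType) (p q r s c h : K) : p*q*(h*c) + r*s*(h*c) = h*((r*s + p*q)*c).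
Proof. ring. Qed.
Lemma mulE (K : fieldType) n (a : 'I_n -> 'I_n -> K) (b : 'I_n -> K) (x y : eacp K n) w :
  eacp_mul a b x y w = 2^-1 * \sum_i (x (Some i) * y None + x None * y (Some i)) *
     (match w with Some k => a i k | None => b i end).
Proof.
rewrite /eacp_mul sE' big_opt sE' big_opt scE /= zE mulr0 add0r.
have H : forall i, (\sum_v (x (Some i) * y v) *: eacp_table a b (Some i) v) w
   = (x (Some i) * y None) * (2^-1 * (match w with Some k => a i k | None => b i end)).
  move=> i; rewrite sE' big_opt scE tabE big1 ?addr0 // => j _.
  by rewrite scE /= zE mulr0.
rewrite (eq_bigr _ (fun i _ => H i)).
under eq_bigr => i _ do rewrite scE tabE.
rewrite -big_split mulr_sumr; apply: eq_bigr => i _ /=.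
exact: aux.
Qed.

Section Main.
Variables (K : fieldType) (n : nat) (a : 'I_n -> 'I_n -> K) (b : 'I_n -> K).
Hypothesis ha : forall i k : 'I_n, \sum_(j < n) a i j * a j k = 0.
Hypothesis hb : forall i : 'I_n, b i = 0.

Lemma mulN (x y : eacp K n) : eacp_mul a b x y None = 0.
Proof. by rewrite mulE big1 ?mulr0 // => i _; rewrite hb mulr0. Qed.

Lemma mulA0 (x y : eacp K n) k : \sum_i eacp_mul a b x y (Some i) * a i k = 0.
Proof.
under eq_bigr => i _ do rewrite mulE -mulrA mulr_suml.
rewrite -mulr_sumr exchange_big big1 ?mulr0 // => l _ /=.
under eq_bigr => i _ do rewrite -mulrA.
by rewrite -mulr_sumr ha mulr0.
Qed.

Lemma mul_l0 (x y z : eacp K n) : eacp_mul a b (eacp_mul a b x y) z = 0.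
Proof.
apply/ffunP => -[k|]; rewrite mulE zE.
  under eq_bigr => i _ do rewrite mulN mul0r addr0 -mulrA [z None * _]mulrC mulrA.
  by rewrite -mulr_suml mulA0 mul0r mulr0.
by rewrite big1 ?mulr0 // => i _; rewrite hb mulr0.
Qed.

Lemma mul_r0 (x y z : eacp K n) : eacp_mul a b z (eacp_mul a b x y) = 0.
Proof.
apply/ffunP => -[k|]; rewrite mulE zE.
  under eq_bigr => i _ do rewrite mulN mulr0 add0r [z None * _]mulrC -mulrA [z None * _]mulrC mulrA.
  by rewrite -mulr_suml mulA0 mul0r mulr0.
by rewrite big1 ?mulr0 // => i _; rewrite hb mulr0.
Qed.

Lemma powP (x : eacp K n) m : (1 < m)%N -> eacp_pow a b x m = eacp_mul a b (eacp_pow a b x m.-1) x.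
Proof. by case: m => [|[|m]]. Qed.
End Main.

Theorem mainTheorem3 (K : fieldType) (n : nat) (hn : (0 < n)%N)
  (hK : (2 : K) != 0)
  (a : 'I_n -> 'I_n -> K) (b : 'I_n -> K)
  (ha : forall i k : 'I_n, \sum_(j < n) a i j * a j k = 0)
  (hb : forall i : 'I_n, b i = 0) :
  let mul := eacp_mul a b in
  (* alternative *)
  (forall x y : eacp K n, mul (mul x x) y = mul x (mul x y)) /\
  (forall x y : eacp K n, mul (mul y x) x = mul y (mul x x)) /\
  (* power associative *)
  (forall (x : eacp K n) (m k : nat), (0 < m)%N -> (0 < k)%N ->
      mul (eacp_pow a b x m) (eacp_pow a b x k) = eacp_pow a b x (m + k)) /\
  (* Jacobi identity *)
  (forall x y z : eacp K n,
      mul (mul x y) z + mul (mul y z) x + mul (mul z x) y = 0) /\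
  (* Jordan identity *)
  (forall x y : eacp K n, mul (mul x y) (mul x x) = mul x (mul y (mul x x))).
Proof.
move=> mul; rewrite /mul.
have L := @mul_l0 _ _ a b ha hb; have R := @mul_r0 _ _ a b ha hb.
split; first by move=> x y; rewrite L R.
split; first by move=> x y; rewrite L R.
split; last first.
  split; first by move=> x y z; rewrite !L !addr0.
  by move=> x y; rewrite L R.
have P := @powP _ _ a b.
move=> x m k m0 k0.
have [m1|k1|e] : [\/ (1 < m)%N, (1 < k)%N | (m = 1 /\ k = 1)%N].
- by case: m m0 => [|[|m]] // _; case: k k0 => [|[|k]] //; constructor.
- rewrite (P x m) // L (P x (m+k)%N) ?(P x (m+k).-1) ?L //; lia.
- rewrite (P x k) // R (P x (m+k)%N) ?(P x (m+k).-1) ?L //; lia.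
- by case: e => -> ->.
Qed.
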